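(* Let $D$ be a centrally finite division algebra with center $F$, and let $R=D[t_1,\ldots,t_n]$ be the ring of polynomials in $n$ central commuting variables over $D$. For any polynomial $p\in R$, there exist $p_1,\ldots,p_m\in F[t_1,\ldots,t_n]$ such that $D[p]=D[p_1,\ldots,p_m]$ inside $R$.
   Context: A division algebra is centrally finite if it is finite-dimensional over its center. For a subset $X\subseteq R$, $D[X]$ denotes the subring of $R$ generated by $D\cup X$. *)

(* Defs.v *)
From HB Require Import structures.
From mathcomp Require Import all_boot all_order all_algebra.
From mathcomp Require Import mpoly.
Set Implicit Arguments. Unset Strict Implicit. Unset Printing Implicit Defensive.
Import GRing.Theory.
Local Open Scope ring_scope.

Definition is_division_ring (D : unitRingType) : Prop :=
  forall x : D, x != 0 -> x \is a GRing.unit.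

Definition central (D : ringType) (x : D) : Prop :=
  forall y : D, x * y = y * x.

Definition centrally_finite (D : ringType) : Prop :=
  exists b : seq D, forall x : D,
    exists c : seq D, size c = size b /\ (forall i, central (nth 0 c i)) /\
      x = \sum_(i < size b) nth 0 c i * nth 0 b i.

Definition subring_pred (R : ringType) (S : R -> Prop) : Prop :=
  [/\ S 1, (forall x y, S x -> S y -> S (x - y)) & (forall x y, S x -> S y -> S (x * y))].

(* D[X] inside R = D[t_1..t_n]: the subring generated by the constants D
   together with the elements of X (intersection of all such subrings). *)
Definition gen_subring (D : ringType) (n : nat) (X : seq {mpoly D[n]})
    (q : {mpoly D[n]}) : Prop :=
  forall S : {mpoly D[n]} -> Prop,
    subring_pred S -> (forall d : D, S d%:MP) -> (forall x, x \in X -> S x) -> S q.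

(* q \in F[t_1..t_n]: all coefficients of q are central in D. *)
Definition over_center (D : ringType) (n : nat) (q : {mpoly D[n]}) : Prop :=
  forall m : 'X_{1..n}, central q@_m.

(* Main.v *)
Require Import Defs.
From HB Require Import structures.
From mathcomp Require Import all_boot all_order all_algebra.
From mathcomp Require Import mpoly.
From Stdlib Require Import Classical.
Set Implicit Arguments. Unset Strict Implicit.
Import GRing.Theory.
Local Open Scope ring_scope.

Lemma mcoeffMC (D : ringType) (n : nat) (p : {mpoly D[n]}) c m :
  (p * c%:MP)@_m = p@_m * c.
Proof.
have E : p * c%:MP = \sum_(k <- msupp p) (p@_k * c) *: 'X_[k].
  rewrite {1}(mpolyE p) mulr_suml; apply: eq_bigr => k _.
  by rewrite -scalerAl -commr_mpolyX mul_mpolyC scalerA.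
rewrite E [in RHS](mpolyE p) !raddf_sum /= mulr_suml; apply: eq_bigr => k _.
by rewrite !mcoeffZ mcoeffX -mulrA commr_nat mulrA.
Qed.

Lemma nz_coef (D : ringType) (n : nat) (w : {mpoly D[n]}) :
  w != 0 -> exists m, w@_m != 0.
Proof.
move=> wn0; apply/not_all_not_ex => H; move/eqP: wn0; apply.
by apply/mpolyP => m; rewrite mcoeff0; move: (H m); case: eqP.
Qed.

Lemma supp_lt (D : ringType) (n : nat) (x y : {mpoly D[n]}) m0 :
  (forall m, x@_m = 0 -> y@_m = 0) -> x@_m0 != 0 -> y@_m0 = 0 ->
  (size (msupp y) < size (msupp x))%N.
Proof.
move=> sub xn yz.
have S : {subset msupp y <= rem m0 (msupp x)}.
  move=> m; rewrite mcoeff_msupp => hy.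
  rewrite (mem_rem_uniq _ (msupp_uniq x)) inE mcoeff_msupp.
  apply/andP; split.
    by apply/eqP => e; move: hy; rewrite e yz eqxx.
  by apply/eqP => hx; move: hy; rewrite (sub _ hx) eqxx.
have := uniq_leq_size (msupp_uniq y) S.
have m0in : m0 \in msupp x by rewrite mcoeff_msupp.
rewrite size_rem //.
by case: (msupp x) m0in => [|a s] //= _.
Qed.

Section Main.
Variables (D : unitRingType) (hdiv : is_division_ring D) (n : nat).
Variable G : {mpoly D[n]} -> Prop.
Hypothesis HG : subring_pred G.
Hypothesis HC : forall d : D, G d%:MP.

Let GB x y : G x -> G y -> G (x - y).
Proof. by case: HG => _ hB _; apply: hB. Qed.
Let GM x y : G x -> G y -> G (x * y).
Proof. by case: HG => _ _ hM; apply: hM. Qed.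

Lemma exists_central k : forall w, (size (msupp w) <= k)%N -> G w -> w != 0 ->
  exists q, [/\ G q, over_center q, q != 0 & forall m, w@_m = 0 -> q@_m = 0].
Proof.
elim: k => [|k IH] w hs Gw wn0.
  have [m0 hm] := nz_coef wn0.
  by move: hs; rewrite leqn0 size_eq0 => /eqP e; move: hm; rewrite -mcoeff_msupp e.
have [m0 hm] := nz_coef wn0.
have hu : w@_m0 \is a GRing.unit by apply: hdiv.
pose w' := (w@_m0)^-1%:MP * w.
have w'm0 : w'@_m0 = 1 by rewrite /w' mcoeffCM mulVr.
have w'sub : forall m, w@_m = 0 -> w'@_m = 0.
  by move=> m hm'; rewrite /w' mcoeffCM hm' mulr0.
have Gw' : G w' by apply: GM.
case: (classic (exists d : D, d%:MP * w' - w' * d%:MP != 0)) => [[d hd]|hno].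
  pose v := d%:MP * w' - w' * d%:MP.
  have vsub : forall m, w@_m = 0 -> v@_m = 0.
    by move=> m hm'; rewrite /v mcoeffB mcoeffCM mcoeffMC (w'sub _ hm') mulr0 mul0r subrr.
  have vm0 : v@_m0 = 0 by rewrite /v mcoeffB mcoeffCM mcoeffMC w'm0 mulr1 mul1r subrr.
  have hs' : (size (msupp v) <= k)%N.
    by rewrite -ltnS; apply: leq_trans hs; apply: (supp_lt vsub hm vm0).
  have Gv : G v by apply: GB; apply: GM.
  have [q [Gq cq qn0 qsub]] := IH v hs' Gv hd.
  by exists q; split => // m hm'; apply: qsub; apply: vsub.
exists w'; split => //.
- move=> m d.
  have : d%:MP * w' - w' * d%:MP = 0.
    by apply/eqP; apply/negPn/negP => h; apply: hno; exists d.
  move/(congr1 (mcoeff m)); rewrite mcoeffB mcoeffCM mcoeffMC mcoeff0.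
  by move/eqP; rewrite subr_eq0 => /eqP.
- by apply/eqP => e; move: w'm0; rewrite e mcoeff0 => /esym/eqP; rewrite oner_eq0.
Qed.

Lemma decomp k : forall x, (size (msupp x) <= k)%N -> G x ->
  exists l : seq (D * {mpoly D[n]}),
    (forall dq, dq \in l -> G dq.2 /\ over_center dq.2) /\
    x = \sum_(dq <- l) dq.1%:MP * dq.2.
Proof.
elim: k => [|k IH] x hs Gx.
  exists [::]; split => //; rewrite big_nil.
  by move: hs; rewrite leqn0 size_eq0 => /eqP e; apply/mpolyP => m;
     apply/eqP; rewrite mcoeff0 mcoeff_eq0 e.
case: (eqVneq x 0) => [->|xn0].
  by exists [::]; split => //; rewrite big_nil.
have [q [Gq cq qn0 qsub]] := exists_central (leqnn _) Gx xn0.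
have [m0 hm] := nz_coef qn0.
have xm0 : x@_m0 != 0 by apply/eqP => e; move: hm; rewrite (qsub _ e) eqxx.
have hu : q@_m0 \is a GRing.unit by apply: hdiv.
pose d := x@_m0 * (q@_m0)^-1.
pose y := x - d%:MP * q.
have ysub : forall m, x@_m = 0 -> y@_m = 0.
  by move=> m hm'; rewrite /y mcoeffB mcoeffCM hm' (qsub _ hm') mulr0 subrr.
have ym0 : y@_m0 = 0 by rewrite /y mcoeffB mcoeffCM /d -mulrA mulVr // mulr1 subrr.
have hs' : (size (msupp y) <= k)%N.
  by rewrite -ltnS; apply: leq_trans hs; apply: (supp_lt ysub xm0 ym0).
have Gy : G y by apply: GB => //; apply: GM.
have [l [hl ey]] := IH y hs' Gy.
exists ((d, q) :: l); split.
  by move=> dq; rewrite inE => /orP [/eqP -> | /hl].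
by rewrite big_cons -ey /y /= addrC subrK.
Qed.

End Main.

Lemma gen_subring_pred (D : ringType) (n : nat) (X : seq {mpoly D[n]}) :
  subring_pred (gen_subring X).
Proof.
split.
- by move=> S [S1 _ _].
- by move=> x y hx hy S HS hC hX; case: (HS) => _ SB _; apply: SB; [apply: hx|apply: hy].
- by move=> x y hx hy S HS hC hX; case: (HS) => _ _ SM; apply: SM; [apply: hx|apply: hy].
Qed.

Lemma gen_subring_C (D : ringType) (n : nat) (X : seq {mpoly D[n]}) d :
  gen_subring X d%:MP.
Proof. by move=> S _ hC _. Qed.

Lemma gen_subring_X (D : ringType) (n : nat) (X : seq {mpoly D[n]}) x :
  x \in X -> gen_subring X x.
Proof. by move=> hx S _ _ hX; apply: hX. Qed.

Lemma subring_sum (R : ringType) (S : R -> Prop) (I : eqType) (r : seq I) F :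
  subring_pred S -> (forall i, i \in r -> S (F i)) -> S (\sum_(i <- r) F i).
Proof.
move=> HS; case: HS => S1 SB SM.
have S0 : S 0 by rewrite -(subrr 1); apply: SB.
have SD : forall a b, S a -> S b -> S (a + b).
  move=> a b ha hb; have -> : a + b = a - (0 - b) by rewrite sub0r opprK.
  by apply: (SB) => //; apply: (SB).
elim: r => [|a r IH] h; first by rewrite big_nil.
rewrite big_cons; apply: (SD); first by apply: h; rewrite inE eqxx.
by apply: IH => i hi; apply: h; rewrite inE hi orbT.
Qed.

Theorem lemma4p4 (D : unitRingType) (hdiv : is_division_ring D)
    (hfin : centrally_finite D) (n : nat) (p : {mpoly D[n]}) :
  exists ps : seq {mpoly D[n]},
    (forall q, q \in ps -> over_center q) /\
    (forall q, gen_subring [:: p] q <-> gen_subring ps q).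
Proof.
have Gp : gen_subring [:: p] p by apply: gen_subring_X; rewrite inE.
have [l [hl ep]] := decomp hdiv (gen_subring_pred [:: p]) (@gen_subring_C _ _ _)
  (leqnn _) Gp.
exists (map snd l); split.
  by move=> q /mapP [dq /hl [_ h] ->].
have psub : gen_subring (map snd l) p.
  rewrite ep; apply: subring_sum; first exact: gen_subring_pred.
  move=> dq hin; case: (gen_subring_pred (map snd l)) => _ _ SM.
  apply: SM; first exact: gen_subring_C.
  by apply: gen_subring_X; apply/mapP; exists dq => //; exact: hin.
move=> q; split.
  move=> hq; apply: hq; [exact: gen_subring_pred | exact: gen_subring_C |].
  by move=> x; rewrite inE => /eqP ->.
move=> hq; apply: hq; [exact: gen_subring_pred | exact: gen_subring_C |].
by move=> x /mapP [dq /hl [h _] ->].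
Qed.
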